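(* Let $\alpha\in\mathbb{C}$ with $|\alpha|<\frac{1}{10}$, and let $\eta:=(1-|\mathrm{Re}(\alpha)|)/3$. Let $g:[0,2]\to\mathbb{R}$ be the continuous piecewise affine map with $g=0$ on $[0,\eta]$, $g=1$ on $[2\eta,2-2\eta]$, $g=0$ on $[2-\eta,2]$, and affine on $[\eta,2\eta]$ and on $[2-2\eta,2-\eta]$; still denote by $g$ its $2$-periodic extension to $\mathbb{R}$. Define $$\psi^{+}(c):=c+\alpha\, g(\mathrm{Re}(c)),\qquad \psi^{-}(c):=c-\alpha+\alpha\, g\big(1+\mathrm{Re}(c-\alpha)\big),\qquad c\in\mathbb{C}.$$ Then $\psi^+,\psi^-$ are homeomorphisms of $\mathbb{C}$ satisfying $$\psi^{+}(c+1-\alpha)=\psi^{-}(c)+1,\quad \psi^{-}(c+1+\alpha)=\psi^{+}(c)+1\quad(\forall c\in\mathbb{C}),\qquad \psi^{+}(0)=\psi^{-}(0)=0,\qquad \lim_{c\to0}\frac{\psi^{\pm}(c)}{c}=\lim_{c\to\infty}\frac{\psi^{\pm}(c)}{c}=1 .$$ Moreover, for all $c\in\mathbb{C}\setminus\{0\}$, $$\left|\frac{\psi^{\pm}(c)}{c}-1\right|<\min\left(\frac{1}{6},\frac{1}{10\,|\mathrm{Re}(c)|}\right)$$ (with $\frac{1}{10|\mathrm{Re}(c)|}:=+\infty$ when $\mathrm{Re}(c)=0$). *)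

(* Defs.v *)
From Stdlib Require Import Reals Lra.
From Coquelicot Require Import Coquelicot.
Open Scope R_scope.

(** 2-periodic reduction of x into [0,2): x - 2 floor(x/2). *)
Definition red2 (x : R) : R := x - 2 * IZR (Int_part (x / 2)).

Definition eta_of (alpha : C) : R := (1 - Rabs (Re alpha)) / 3.

Definition g0 (eta t : R) : R :=
  if Rle_dec t eta then 0
  else if Rle_dec t (2 * eta) then (t - eta) / eta
  else if Rle_dec t (2 - 2 * eta) then 1
  else if Rle_dec t (2 - eta) then (2 - eta - t) / eta
  else 0.

Definition g (alpha : C) (x : R) : R := g0 (eta_of alpha) (red2 x).

Definition psi_plus (alpha : C) (c : C) : C :=
  (c + alpha * RtoC (g alpha (Re c)))%C.

Definition psi_minus (alpha : C) (c : C) : C :=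
  (c - alpha + alpha * RtoC (g alpha (1 + Re (c - alpha))))%C.

Definition is_homeomorphism (f : C -> C) : Prop :=
  exists h : C -> C,
    (forall x, h (f x) = x) /\ (forall y, f (h y) = y) /\
    (forall x, continuous f x) /\ (forall y, continuous h y).

Definition lim_at0 (f : C -> C) (l : C) : Prop :=
  filterlim f (locally' (RtoC 0)) (locally l).

Definition lim_at_infty (f : C -> C) (l : C) : Prop :=
  forall eps : R, 0 < eps -> exists M : R,
    forall c : C, M < Cmod c -> Cmod (f c - l)%C < eps.

Definition ratio_bound (f : C -> C) : Prop :=
  forall c : C, c <> RtoC 0 ->
    Cmod (f c / c - 1)%C < 1 / 6 /\
    (Re c <> 0 -> Cmod (f c / c - 1)%C < 1 / (10 * Rabs (Re c))).

(* Main.v *)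
Require Import Defs.
From Stdlib Require Import Reals Lra Lia FunctionalExtensionality.
From Coquelicot Require Import Coquelicot.
Open Scope R_scope.

Definition T (e t : R) : R := Rmax 0 (Rmin e (Rmin (t - e) (2 - e - t))).

Ltac tcase := unfold T, Rmax, Rmin; repeat destruct Rle_dec; lra.

Lemma g0_T e t : 0 < e -> e <= 1/2 -> g0 e t = / e * T e t.
Proof.
  intros He He2. unfold g0.
  destruct (Rle_dec t e).
  { replace (T e t) with 0 by tcase. field; lra. }
  destruct (Rle_dec t (2*e)).
  { replace (T e t) with (t - e) by tcase. field; lra. }
  destruct (Rle_dec t (2 - 2*e)).
  { replace (T e t) with e by tcase. field; lra. }
  destruct (Rle_dec t (2 - e)).
  { replace (T e t) with (2 - e - t) by tcase. field; lra. }
  replace (T e t) with 0 by tcase. field; lra.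
Qed.

Lemma T_range e t : 0 < e -> 0 <= T e t <= e.
Proof. intros; split; tcase. Qed.

Lemma T_lip e s t : Rabs (T e s - T e t) <= Rabs (s - t).
Proof. unfold Rabs; repeat destruct Rcase_abs; tcase. Qed.

Lemma T_0 e : 0 < e -> T e 0 = 0.
Proof. intros; tcase. Qed.
Lemma T_2 e : 0 < e -> T e 2 = 0.
Proof. intros; tcase. Qed.
Lemma T_low e t : 0 < e -> t <= e -> T e t = 0.
Proof. intros; tcase. Qed.
Lemma T_high e t : 0 < e -> 2 - e <= t -> T e t = 0.
Proof. intros; tcase. Qed.
Lemma T_mid e t : 0 < e -> 2*e <= t <= 2 - 2*e -> T e t = e.
Proof. intros; tcase. Qed.

Lemma Int_part_eq r z : IZR z <= r < IZR z + 1 -> Int_part r = z.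
Proof.
  intros [H1 H2]. unfold Int_part.
  rewrite <- (tech_up r (z+1)); [lia| rewrite plus_IZR; lra | rewrite plus_IZR; lra].
Qed.

Lemma eta_bounds alpha : Cmod alpha < 1/10 ->
  3/10 < eta_of alpha <= 1/3 /\ Rabs (Re alpha) < 1/10 /\ eta_of alpha = (1 - Rabs (Re alpha))/3.
Proof.
  intros H. pose proof (re_le_Cmod alpha). pose proof (Rabs_pos (Re alpha)).
  unfold eta_of. repeat split; lra.
Qed.

Lemma g_block alpha x (k : Z) : 0 < eta_of alpha <= 1/2 ->
  2 * IZR k <= x <= 2 * IZR k + 2 ->
  g alpha x = / eta_of alpha * T (eta_of alpha) (x - 2 * IZR k).
Proof.
  intros [He He2] [H1 H2]. unfold g, red2. rewrite g0_T by lra.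
  destruct (Rlt_or_le x (2 * IZR k + 2)).
  - rewrite (Int_part_eq (x/2) k) by lra. reflexivity.
  - rewrite (Int_part_eq (x/2) (k+1)) by (rewrite plus_IZR; lra).
    rewrite plus_IZR. replace (x - 2 * (IZR k + 1)) with 0 by lra.
    replace (x - 2 * IZR k) with 2 by lra. rewrite T_0, T_2 by lra. reflexivity.
Qed.

Lemma blk x : 2 * IZR (Int_part (x/2)) <= x < 2 * IZR (Int_part (x/2)) + 2.
Proof. pose proof (base_Int_part (x/2)). lra. Qed.

Section G.
Variable alpha : C.
Hypothesis Ha : Cmod alpha < 1/10.
Let e := eta_of alpha.
Lemma e_pos : 3/10 < e <= 1/3.
Proof. unfold e; apply eta_bounds; auto. Qed.
Lemma e_h : 0 < e <= 1/2.
Proof. pose proof e_pos; lra. Qed.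

Lemma gB x : g alpha x = / e * T e (x - 2 * IZR (Int_part (x/2))).
Proof. apply g_block. apply e_h. pose proof (blk x); lra. Qed.

Lemma g_range x : 0 <= g alpha x <= 1.
Proof.
  rewrite gB. pose proof e_h. pose proof (T_range e (x - 2 * IZR (Int_part (x / 2)))).
  set (u := T _ _) in *. split.
  - apply Rmult_le_pos; [left; apply Rinv_0_lt_compat|]; lra.
  - replace 1 with (/ e * e) by (field; lra).
    apply Rmult_le_compat_l; [left; apply Rinv_0_lt_compat|]; lra.
Qed.

Lemma g_per x : g alpha (x + 2) = g alpha x.
Proof.
  pose proof (blk x). set (k := Int_part (x/2)) in *.
  rewrite (g_block alpha (x+2) (k+1)) by (apply e_h || (rewrite plus_IZR; lra)).
  rewrite (g_block alpha x k) by (apply e_h || lra).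
  rewrite plus_IZR. f_equal. f_equal. ring.
Qed.

Lemma g_zero x : Rabs x <= e -> g alpha x = 0.
Proof.
  intros H. pose proof e_h. unfold e in *. destruct (Rle_or_lt 0 x).
  - rewrite Rabs_right in H by lra.
    rewrite (g_block alpha x 0) by (apply e_h || (simpl; lra)).
    rewrite T_low; [ring|lra|]. simpl; lra.
  - rewrite Rabs_left in H by lra.
    rewrite (g_block alpha x (-1)) by (apply e_h || (simpl; lra)).
    rewrite T_high; [ring|lra|]. simpl; lra.
Qed.

Lemma g_one t : 2 * e <= t <= 2 - 2 * e -> g alpha t = 1.
Proof.
  intros H. pose proof e_h. unfold e in *.
  rewrite (g_block alpha t 0) by (apply e_h || (simpl; lra)).
  rewrite T_mid; [field; lra|lra|]. simpl; lra.
Qed.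

Lemma g_lip_le x y : x <= y -> Rabs (g alpha x - g alpha y) <= Rabs (x - y) / e.
Proof.
  intros Hxy. pose proof e_h as [He _]. unfold e in *.
  pose proof (blk x) as Bx. pose proof (blk y) as By.
  set (kx := Int_part (x/2)) in *. set (ky := Int_part (y/2)) in *.
  assert (Hie : 0 < / eta_of alpha) by (apply Rinv_0_lt_compat; lra).
  destruct (Z.lt_total kx ky) as [Hl|[Heq|Hg]].
  - assert (Hk : IZR kx + 1 <= IZR ky) by (rewrite <- plus_IZR; apply IZR_le; lia).
    rewrite (g_block alpha x kx) by (apply e_h || lra).
    rewrite (g_block alpha y ky) by (apply e_h || lra).
    pose proof (T_range (eta_of alpha) (x - 2 * IZR kx) He). pose proof (T_range (eta_of alpha) (y - 2 * IZR ky) He).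
    pose proof (T_lip (eta_of alpha) (x - 2 * IZR kx) 2). pose proof (T_lip (eta_of alpha) (y - 2 * IZR ky) 0).
    rewrite T_2, T_0 in * by lra.
    repeat rewrite Rminus_0_r in H1. repeat rewrite Rminus_0_r in H2.
    rewrite (Rabs_right (T (eta_of alpha) (x - 2 * IZR kx))) in H1 by lra.
    rewrite (Rabs_right (T (eta_of alpha) (y - 2 * IZR ky))) in H2 by lra.
    rewrite (Rabs_left1 (x - 2 * IZR kx - 2)) in H1 by lra.
    rewrite (Rabs_right (y - 2 * IZR ky)) in H2 by lra.
    rewrite <- Rmult_minus_distr_l, Rabs_mult, Rabs_right by lra.
    unfold Rdiv; rewrite (Rmult_comm (Rabs (x - y))). apply Rmult_le_compat_l; [lra|].
    rewrite (Rabs_left1 (x - y)) by lra. unfold Rabs; destruct Rcase_abs; lra.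
  - rewrite (g_block alpha x kx) by (apply e_h || lra).
    rewrite (g_block alpha y kx) by (apply e_h || (rewrite Heq; lra)).
    rewrite <- Rmult_minus_distr_l, Rabs_mult, Rabs_right by lra.
    unfold Rdiv; rewrite (Rmult_comm (Rabs (x - y))). apply Rmult_le_compat_l; [lra|].
    eapply Rle_trans; [apply T_lip|]. right; f_equal; ring.
  - exfalso. assert (IZR ky + 1 <= IZR kx) by (rewrite <- plus_IZR; apply IZR_le; lia). lra.
Qed.

Lemma g_lip x y : Rabs (g alpha x - g alpha y) <= Rabs (x - y) / e.
Proof.
  destruct (Rle_or_lt x y). apply g_lip_le; auto.
  rewrite Rabs_minus_sym, (Rabs_minus_sym x). apply g_lip_le; lra.
Qed.
End G.

Lemma lip_continuity (F : R -> R) M : 0 < M ->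
  (forall x y, Rabs (F x - F y) <= M * Rabs (x - y)) -> continuity F.
Proof.
  intros HM HF x. unfold continuity_pt, continue_in, limit1_in, limit_in.
  intros eps Heps. exists (eps / M). split.
  - apply Rlt_gt, Rdiv_lt_0_compat; lra.
  - intros y [_ Hy]. simpl in *. unfold R_dist in *.
    eapply Rle_lt_trans; [apply HF|].
    apply Rmult_lt_compat_l with (r := M) in Hy; [|lra].
    replace (M * (eps / M)) with eps in Hy by (field; lra). lra.
Qed.

Lemma Clip_cont (F : C -> C) :
  (forall x y, Cmod (F x - F y) <= 2 * Cmod (x - y)) -> forall x, continuous F x.
Proof.
  intros HF x. unfold continuous. apply filterlim_locally. intros eps.
  apply (locally_le_locally_norm (K:=C_AbsRing) (V:=C_NormedModule) x).
  assert (H2 : 0 < eps / 2) by (destruct eps; simpl; lra).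
  exists (mkposreal _ H2). intros y Hy. apply (norm_compat1 (K:=C_AbsRing) (V:=C_NormedModule) (F x) (F y) eps).
  change (Cmod (F y - F x) < eps).
  unfold ball_norm in Hy. change (Cmod (y - x) < eps / 2) in Hy.
  eapply Rle_lt_trans; [apply HF|]. lra.
Qed.

Lemma Re_mulR (c : C) r : Re (c * RtoC r) = Re c * r.
Proof. destruct c; unfold RtoC; simpl. ring. Qed.

Lemma Cmod_mulR (c : C) r : Cmod (c * RtoC r) = Cmod c * Rabs r.
Proof. rewrite Cmod_mult, Cmod_R. reflexivity. Qed.

Lemma div_lt_helper a b d : 0 < b -> 0 < d -> a * d < b -> a / b < 1 / d.
Proof.
  intros Hb Hd H. apply Rmult_lt_reg_r with (b * d); [nra|].
  replace (a / b * (b * d)) with (a * d) by (field; lra).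
  replace (1 / d * (b * d)) with b by (field; lra). exact H.
Qed.

Section Gen.
Variables (beta : C) (K : R -> R) (e : R).
Hypothesis Hb : Cmod beta < 1/10.
Hypothesis He : 3/10 < e.
Hypothesis HK01 : forall x, 0 <= K x <= 1.
Hypothesis HKlip : forall x y, Rabs (K x - K y) <= Rabs (x - y) / e.
Hypothesis HKz : forall x, Rabs x <= e -> K x = 0.
Hypothesis HKs : forall x, e <= Rabs x -> e * K x <= Rabs x - e.

Definition fG (c : C) : C := (c + beta * RtoC (K (Re c)))%C.
Definition phi (x : R) : R := x + Re beta * K x.

Lemma Kl x y : Rabs (K x - K y) <= 10/3 * Rabs (x - y).
Proof.
  eapply Rle_trans; [apply HKlip|]. unfold Rdiv. rewrite (Rmult_comm (Rabs (x - y))).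
  apply Rmult_le_compat_r; [apply Rabs_pos|].
  apply Rle_trans with (/ (3/10)); [apply Rinv_le_contravar; lra | right; field].
Qed.

Lemma Kl3 x y : Cmod beta * Rabs (K x - K y) <= 1/3 * Rabs (x - y).
Proof.
  pose proof (Kl x y). pose proof (Cmod_ge_0 beta). pose proof (Rabs_pos (K x - K y)).
  pose proof (Rabs_pos (x - y)). nra.
Qed.

Lemma Reb : Rabs (Re beta) <= Cmod beta.
Proof. apply re_le_Cmod. Qed.

Lemma phi_mono x y : 2/3 * Rabs (x - y) <= Rabs (phi x - phi y).
Proof.
  pose proof (Kl3 x y). pose proof Reb.
  assert (HP : Rabs (Re beta * (K x - K y)) <= 1/3 * Rabs (x - y)).
  { rewrite Rabs_mult. eapply Rle_trans; [|apply H].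
    apply Rmult_le_compat_r; [apply Rabs_pos|lra]. }
  unfold phi. replace (x + Re beta * K x - (y + Re beta * K y)) with ((x - y) + Re beta * (K x - K y)) by ring.
  revert HP. generalize (Re beta * (K x - K y)). intros P HP.
  unfold Rabs in *. repeat destruct Rcase_abs; lra.
Qed.

Lemma phi_lip x y : Rabs (phi x - phi y) <= 2 * Rabs (x - y).
Proof.
  pose proof (Kl3 x y). pose proof Reb.
  assert (HP : Rabs (Re beta * (K x - K y)) <= 1/3 * Rabs (x - y)).
  { rewrite Rabs_mult. eapply Rle_trans; [|apply H].
    apply Rmult_le_compat_r; [apply Rabs_pos|lra]. }
  unfold phi. replace (x + Re beta * K x - (y + Re beta * K y)) with ((x - y) + Re beta * (K x - K y)) by ring.
  revert HP. generalize (Re beta * (K x - K y)). intros P HP.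
  unfold Rabs in *. repeat destruct Rcase_abs; lra.
Qed.

Lemma bK x : Rabs (Re beta * K x) < 1/10.
Proof.
  pose proof Reb. pose proof (HK01 x). rewrite Rabs_mult, (Rabs_right (K x)) by lra.
  pose proof (Rabs_pos (Re beta)). nra.
Qed.

Lemma phi_surj u : {x | phi x = u}.
Proof.
  destruct (IVT (fun x => phi x - u) (u - 2) (u + 2)) as [x [_ Hx]].
  - apply lip_continuity with 2; [lra|]. intros x y.
    replace (phi x - u - (phi y - u)) with (phi x - phi y) by ring. apply phi_lip.
  - lra.
  - pose proof (bK (u - 2)). unfold phi. apply Rabs_def2 in H as [H1 H2]. lra.
  - pose proof (bK (u + 2)). unfold phi. apply Rabs_def2 in H as [H1 H2]. lra.
  - exists x. lra.
Qed.

Definition phiinv u := proj1_sig (phi_surj u).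
Lemma phiinv_spec u : phi (phiinv u) = u.
Proof. unfold phiinv; destruct (phi_surj u); auto. Qed.

Lemma phi_inj x y : phi x = phi y -> x = y.
Proof.
  intros H. pose proof (phi_mono x y). rewrite H in H0. replace (phi y - phi y) with 0 in H0 by ring. rewrite Rabs_R0 in H0.
  pose proof (Rabs_pos (x - y)). assert (Rabs (x - y) = 0) by lra.
  apply Rabs_eq_0 in H2. lra.
Qed.

Lemma phiinv_lip u v : Rabs (phiinv u - phiinv v) <= 3/2 * Rabs (u - v).
Proof.
  pose proof (phi_mono (phiinv u) (phiinv v)). rewrite !phiinv_spec in H. lra.
Qed.

Definition hG (w : C) : C := (w - beta * RtoC (K (phiinv (Re w))))%C.

Lemma Re_fG c : Re (fG c) = phi (Re c).
Proof. unfold fG, phi. change (Re c + Re (beta * RtoC (K (Re c))) = Re c + Re beta * K (Re c)).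
  rewrite Re_mulR. reflexivity. Qed.

Lemma Re_hG w : Re (hG w) = phiinv (Re w).
Proof.
  unfold hG. change (Re w - Re (beta * RtoC (K (phiinv (Re w)))) = phiinv (Re w)).
  rewrite Re_mulR. pose proof (phiinv_spec (Re w)). unfold phi in H. lra.
Qed.

Lemma fG_lip x y : Cmod (fG x - fG y) <= 2 * Cmod (x - y).
Proof.
  unfold fG.
  replace (x + beta * RtoC (K (Re x)) - (y + beta * RtoC (K (Re y))))%C
    with ((x - y) + beta * RtoC (K (Re x) - K (Re y)))%C by (rewrite RtoC_minus; ring).
  eapply Rle_trans; [apply Cmod_triangle|]. rewrite Cmod_mulR.
  pose proof (Kl3 (Re x) (Re y)). pose proof (re_le_Cmod (x - y)).
  change (Re (x - y)) with (Re x - Re y) in H0. pose proof (Cmod_ge_0 (x - y)). lra.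
Qed.

Lemma hG_lip x y : Cmod (hG x - hG y) <= 2 * Cmod (x - y).
Proof.
  unfold hG.
  replace (x - beta * RtoC (K (phiinv (Re x))) - (y - beta * RtoC (K (phiinv (Re y)))))%C
    with ((x - y) + - beta * RtoC (K (phiinv (Re x)) - K (phiinv (Re y))))%C by (rewrite RtoC_minus; ring).
  eapply Rle_trans; [apply Cmod_triangle|]. rewrite Cmod_mulR, Cmod_opp.
  pose proof (Kl3 (phiinv (Re x)) (phiinv (Re y))). pose proof (re_le_Cmod (x - y)).
  change (Re (x - y)) with (Re x - Re y) in H0. pose proof (phiinv_lip (Re x) (Re y)). pose proof (Cmod_ge_0 (x - y)). pose proof (Cmod_ge_0 beta). pose proof (Rabs_pos (Re x - Re y)). nra.
Qed.

Lemma fG_homeo : is_homeomorphism fG.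
Proof.
  exists hG. split; [|split; [|split]].
  - intros c. assert (Re c = phiinv (Re (fG c))).
    { apply phi_inj. rewrite phiinv_spec, Re_fG. reflexivity. }
    unfold hG. rewrite <- H. unfold fG. ring.
  - intros w. unfold fG. rewrite Re_hG. unfold hG. ring.
  - apply Clip_cont, fG_lip.
  - apply Clip_cont, hG_lip.
Qed.

Lemma ratio_eq (c : C) : c <> 0%C -> (fG c / c - 1)%C = (beta * RtoC (K (Re c)) / c)%C.
Proof. intros H. unfold fG. field. auto. Qed.

Lemma Cmod_ratio (c : C) : c <> 0%C -> Cmod (fG c / c - 1)%C = Cmod beta * K (Re c) / Cmod c.
Proof.
  intros H. rewrite ratio_eq, Cmod_div, Cmod_mulR by auto.
  rewrite Rabs_right; [reflexivity|]. destruct (HK01 (Re c)); lra.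
Qed.

Lemma twoK x : 2 * e * K x <= Rabs x.
Proof.
  destruct (Rle_or_lt (Rabs x) e).
  - rewrite HKz by auto. pose proof (Rabs_pos x). lra.
  - pose proof (HKs x ltac:(lra)). pose proof (HK01 x). nra.
Qed.

Lemma fG_ratio : ratio_bound fG.
Proof.
  intros c Hc. rewrite Cmod_ratio by auto.
  pose proof (proj1 (Cmod_gt_0 c) Hc) as Hm.
  pose proof (re_le_Cmod c) as Hre. pose proof (twoK (Re c)).
  pose proof (HK01 (Re c)). pose proof (Cmod_ge_0 beta).
  set (k := K (Re c)) in *. set (m := Cmod c) in *. set (B := Cmod beta) in *.
  set (x := Re c) in *.
  split.
  - apply Rmult_lt_reg_r with m; [lra|]. unfold Rdiv. rewrite Rmult_assoc, Rinv_l by lra.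
    destruct (Req_dec k 0) as [Hk0|Hk0].
    + rewrite Hk0. lra.
    + assert (3/5 * k <= m) by nra. nra.
  - intros Hx. assert (0 < Rabs x) by (apply Rabs_pos_lt; auto).
    apply div_lt_helper; [lra|lra|].
    destruct (Req_dec k 0) as [Hk0|Hk0].
    + rewrite Hk0. lra.
    + assert (B * k < 1/10) by nra. nra.
Qed.

Lemma fG_inf : lim_at_infty (fun c => (fG c / c)%C) 1%C.
Proof.
  intros eps Heps. exists (/ eps). intros c Hc.
  assert (Hm : 0 < Cmod c) by (pose proof (Rinv_0_lt_compat eps Heps); lra).
  assert (Hc0 : c <> 0%C) by (apply Cmod_gt_0; auto).
  rewrite Cmod_ratio by auto.
  pose proof (HK01 (Re c)). pose proof (Cmod_ge_0 beta).
  assert (eps * Cmod c > 1).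
  { rewrite <- (Rinv_r eps) by lra. apply Rmult_lt_compat_l; lra. }
  apply Rmult_lt_reg_r with (Cmod c); [lra|]. unfold Rdiv. rewrite Rmult_assoc, Rinv_l by lra.
  nra.
Qed.

Lemma fG_0 : lim_at0 (fun c => (fG c / c)%C) 1%C.
Proof.
  unfold lim_at0. apply filterlim_locally. intros eps.
  unfold locally', within. apply (locally_le_locally_norm (K:=C_AbsRing) (V:=C_NormedModule) (RtoC 0)).
  assert (H : 0 < e) by lra.
  exists (mkposreal _ H). intros y0 Hy Hy0.
  unfold ball_norm in Hy. change (Cmod (y0 - 0) < e) in Hy.
  set (y := (y0 : C)) in *.
  assert (Hy' : Cmod y < e) by (replace y with (y - 0)%C by ring; exact Hy).
  assert (H0 : (fG y / y = 1)%C).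
  { unfold fG. rewrite HKz.
    - field. auto.
    - pose proof (re_le_Cmod y). simpl in Hy'. lra. }
  change (ball (RtoC 1) eps (fG y / y)%C). rewrite H0. apply ball_center.
Qed.

Lemma gen_all (F : C -> C) : (forall c, F c = fG c) ->
  is_homeomorphism F /\ ratio_bound F /\ lim_at0 (fun c => (F c / c)%C) 1%C /\
  lim_at_infty (fun c => (F c / c)%C) 1%C.
Proof.
  intros HF. assert (F = fG) by (apply functional_extensionality; auto).
  subst F. split; [apply fG_homeo|split; [apply fG_ratio|split; [apply fG_0|apply fG_inf]]].
Qed.
End Gen.

Theorem mainTheorem3 (alpha : C) (Halpha : Cmod alpha < 1 / 10) :
  is_homeomorphism (psi_plus alpha) /\ is_homeomorphism (psi_minus alpha) /\
  (forall c : C, psi_plus alpha (c + 1 - alpha)%C = (psi_minus alpha c + 1)%C) /\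
  (forall c : C, psi_minus alpha (c + 1 + alpha)%C = (psi_plus alpha c + 1)%C) /\
  psi_plus alpha 0%C = 0%C /\ psi_minus alpha 0%C = 0%C /\
  lim_at0 (fun c => (psi_plus alpha c / c)%C) 1%C /\
  lim_at0 (fun c => (psi_minus alpha c / c)%C) 1%C /\
  lim_at_infty (fun c => (psi_plus alpha c / c)%C) 1%C /\
  lim_at_infty (fun c => (psi_minus alpha c / c)%C) 1%C /\
  ratio_bound (psi_plus alpha) /\ ratio_bound (psi_minus alpha).
Proof.
  destruct (eta_bounds alpha Halpha) as [Heb [Ha Hedef]].
  set (e := eta_of alpha) in *. set (a := Re alpha) in *.
  assert (HP : is_homeomorphism (psi_plus alpha) /\ ratio_bound (psi_plus alpha) /\
    lim_at0 (fun c => (psi_plus alpha c / c)%C) 1%C /\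
    lim_at_infty (fun c => (psi_plus alpha c / c)%C) 1%C).
  { apply (gen_all alpha (g alpha) e); auto; try lra.
    - apply g_range; auto.
    - apply g_lip; auto.
    - apply g_zero; auto.
    - intros x Hx. pose proof (g_range alpha Halpha x).
      destruct (Rle_or_lt 0 x).
      + rewrite Rabs_right in * by lra.
        pose proof (g_lip alpha Halpha x e). fold e in H1. rewrite (g_zero alpha Halpha e) in H1
          by (rewrite Rabs_right; fold e; lra).
        rewrite Rminus_0_r, Rabs_right, Rabs_right in H1 by lra.
        apply Rmult_le_compat_l with (r := e) in H1; [|lra].
        replace (e * ((x - e) / e)) with (x - e) in H1 by (field; lra). exact H1.
      + rewrite Rabs_left in * by lra.
        pose proof (g_lip alpha Halpha x (-e)). fold e in H1. rewrite (g_zero alpha Halpha (-e)) in H1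
          by (rewrite Rabs_left; fold e; lra).
        rewrite Rminus_0_r, Rabs_right, Rabs_left1 in H1 by lra.
        apply Rmult_le_compat_l with (r := e) in H1; [|lra].
        replace (e * (- (x - - e) / e)) with (- x - e) in H1 by (field; lra). exact H1. }
  set (Km := fun x => 1 - g alpha (1 + x - a)).
  assert (HM : is_homeomorphism (psi_minus alpha) /\ ratio_bound (psi_minus alpha) /\
    lim_at0 (fun c => (psi_minus alpha c / c)%C) 1%C /\
    lim_at_infty (fun c => (psi_minus alpha c / c)%C) 1%C).
  { apply (gen_all (- alpha) Km e); auto; try lra.
    - rewrite Cmod_opp; auto.
    - intros x; unfold Km. pose proof (g_range alpha Halpha (1 + x - a)). lra.
    - intros x y; unfold Km.
      replace (1 - g alpha (1 + x - a) - (1 - g alpha (1 + y - a)))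
        with (g alpha (1 + y - a) - g alpha (1 + x - a)) by ring.
      eapply Rle_trans; [apply g_lip; auto|]. fold e.
      replace (1 + y - a - (1 + x - a)) with (- (x - y)) by ring. rewrite Rabs_Ropp. lra.
    - intros x Hx. unfold Km. rewrite g_one; [ring|auto|]. fold e.
      unfold Rabs in Hx, Hedef, Ha |- *. destruct (Rcase_abs x); destruct (Rcase_abs a); lra.
    - intros x Hx. unfold Km.
      assert (Hx1 : x <= Rabs x) by apply RRle_abs.
      assert (Hx2 : - x <= Rabs x) by (rewrite <- Rabs_Ropp; apply RRle_abs).
      assert (Ha1 : a <= Rabs a) by apply RRle_abs.
      assert (Ha2 : - a <= Rabs a) by (rewrite <- Rabs_Ropp; apply RRle_abs).
      destruct (Rlt_or_le (1 + x - a) (2 * e)) as [Hlo|Hlo].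
      + pose proof (g_lip alpha Halpha (2 * e) (1 + x - a)). fold e in H.
        rewrite (g_one alpha Halpha (2 * e)) in H by (fold e; lra).
        pose proof (g_range alpha Halpha (1 + x - a)).
        rewrite (Rabs_right (2 * e - (1 + x - a))) in H by lra.
        rewrite (Rabs_right (1 - g alpha (1 + x - a))) in H by lra.
        apply Rmult_le_compat_l with (r := e) in H; [|lra].
        replace (e * ((2 * e - (1 + x - a)) / e)) with (2 * e - (1 + x - a)) in H by (field; lra).
        pose proof (Rabs_pos (1 - g alpha (1 + x - a))). lra.
      + destruct (Rle_or_lt (1 + x - a) (2 - 2 * e)) as [Hhi|Hhi].
        * rewrite g_one by (auto || (fold e; lra)).
          pose proof (Rabs_pos x). lra.
        * pose proof (g_lip alpha Halpha (1 + x - a) (2 - 2 * e)). fold e in H.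
          rewrite (g_one alpha Halpha (2 - 2 * e)) in H by (fold e; lra).
          pose proof (g_range alpha Halpha (1 + x - a)).
          rewrite (Rabs_right (1 + x - a - (2 - 2 * e))) in H by lra.
          rewrite (Rabs_left1 (g alpha (1 + x - a) - 1)) in H by lra.
          apply Rmult_le_compat_l with (r := e) in H; [|lra].
          replace (e * ((1 + x - a - (2 - 2 * e)) / e)) with (1 + x - a - (2 - 2 * e)) in H by (field; lra).
          lra.
    - intros c. unfold psi_minus, Km.
      replace (1 + Re (c - alpha)) with (1 + Re c - a) by (unfold a; change (Re (c - alpha)) with (Re c - Re alpha); ring).
      unfold fG. rewrite RtoC_minus. ring. }
  destruct HP as [HP1 [HP2 [HP3 HP4]]]. destruct HM as [HM1 [HM2 [HM3 HM4]]].
  refine (conj HP1 (conj HM1 (conj _ (conj _ (conj _ (conj _ (conj HP3 (conj HM3 (conj HP4 (conj HM4 (conj HP2 HM2))))))))))).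
  - intros c. unfold psi_plus, psi_minus.
    replace (Re (c + 1 - alpha)) with (1 + Re (c - alpha))
      by (change (Re (c + 1 - alpha)) with (Re c + 1 - Re alpha);
          change (Re (c - alpha)) with (Re c - Re alpha); ring).
    ring.
  - intros c. unfold psi_plus, psi_minus.
    replace (1 + Re (c + 1 + alpha - alpha)) with (Re c + 2)
      by (change (Re (c + 1 + alpha - alpha)) with (Re c + 1 + Re alpha - Re alpha); ring).
    rewrite g_per by auto. ring.
  - unfold psi_plus. rewrite g_zero by (auto || (change (Re 0) with 0; rewrite Rabs_R0; fold e; lra)).
    ring.
  - unfold psi_minus. rewrite g_one.
    + ring.
    + auto.
    + change (Re (0 - alpha)) with (0 - Re alpha). fold a e.
      unfold Rabs in Hedef, Ha. destruct Rcase_abs; lra.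
Qed.
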